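(* For $n\ge2$ let $E_n=(\mathbb{R}^2,\|\cdot\|_n)$ with $\|(x,y)\|_n=(|x|^n+|y|^n)^{1/n}$, and let $X$ be the Banach space of sequences $u=(u_n)_{n\ge2}$ with $u_n\in E_n$ and $\|u\|=\left(\sum_{n=2}^\infty\|u_n\|_n^2\right)^{1/2}<\infty$. Let $B_X=\{u\in X:\|u\|\le1\}$ and $B=\{u\in X:\|u\|\ge2\}$. Then there exist bounded sequences $\{x_n\},\{z_n\}\subset B_X$ and $\{y_n\}\subset B$ with $\lim_n\|x_n-y_n\|=\lim_n\|z_n-y_n\|=\mathrm{dist}(B_X,B)=1$ and $\lim_n\|x_n-z_n\|=2$; in particular the ordered pair $(B_X,B)$ has neither the $UC$ property nor the $BUC$ property.
   Context: $\mathrm{dist}(A,B)=\inf\{\|a-b\|:a\in A,b\in B\}$. The ordered pair $(A,B)$ has the $UC$ property if for all sequences $\{x_n\},\{z_n\}\subset A$, $\{y_n\}\subset B$ with $\lim_n\|x_n-y_n\|=\lim_n\|z_n-y_n\|=\mathrm{dist}(A,B)$ one has $\lim_n\|x_n-z_n\|=0$. It has the bounded $UC$ property ($BUC$) if the same implication holds whenever in addition $\{x_n\}$ and $\{z_n\}$ are bounded. *)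

(* Defs.v *)
From Stdlib Require Import Reals.
From Coquelicot Require Import Coquelicot.
Open Scope R_scope.

(* Elements of X are represented as u : nat -> R*R, where u k is the
   component lying in E_{k+2}  (i.e. the paper's u_{k+2}). *)
Definition Xseq := nat -> (R * R).

(* ||(x,y)||_n = (|x|^n + |y|^n)^(1/n); the value at (0,0) is 0
   (Rpower 0 _ is not 0 in Stdlib, hence the case split). *)
Definition pnorm (n : nat) (p : R * R) : R :=
  let s := Rabs (fst p) ^ n + Rabs (snd p) ^ n in
  if Req_EM_T s 0 then 0 else Rpower s (/ INR n).

Definition sqterm (u : Xseq) (k : nat) : R := (pnorm (k + 2) (u k)) ^ 2.

Definition inX (u : Xseq) : Prop := ex_series (sqterm u).

Definition normX (u : Xseq) : R := sqrt (Series (sqterm u)).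

Definition subX (u v : Xseq) : Xseq :=
  fun k => (fst (u k) - fst (v k), snd (u k) - snd (v k)).

Definition BX (u : Xseq) : Prop := inX u /\ normX u <= 1.
Definition Bout (u : Xseq) : Prop := inX u /\ normX u >= 2.

Definition distX (A B : Xseq -> Prop) : Rbar :=
  Glb_Rbar (fun r => exists a b, A a /\ B b /\ r = normX (subX a b)).

Definition boundedX (s : nat -> Xseq) : Prop :=
  exists M : R, forall m, normX (s m) <= M.

Definition UC (A B : Xseq -> Prop) : Prop :=
  forall x z y : nat -> Xseq,
    (forall m, A (x m)) -> (forall m, A (z m)) -> (forall m, B (y m)) ->
    is_lim_seq (fun m => normX (subX (x m) (y m))) (distX A B) ->
    is_lim_seq (fun m => normX (subX (z m) (y m))) (distX A B) ->
    is_lim_seq (fun m => normX (subX (x m) (z m))) 0.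

Definition BUC (A B : Xseq -> Prop) : Prop :=
  forall x z y : nat -> Xseq,
    (forall m, A (x m)) -> (forall m, A (z m)) -> (forall m, B (y m)) ->
    boundedX x -> boundedX z ->
    is_lim_seq (fun m => normX (subX (x m) (y m))) (distX A B) ->
    is_lim_seq (fun m => normX (subX (z m) (y m))) (distX A B) ->
    is_lim_seq (fun m => normX (subX (x m) (z m))) 0.

(* Main.v *)
Require Import Defs.
From Stdlib Require Import Reals Lra Lia.
From Coquelicot Require Import Coquelicot.
Open Scope R_scope.

Lemma powS_lt (a b : R) (n : nat) : 0 <= a < b -> a ^ S n < b ^ S n.
Proof.
  intros [Ha Hab]. induction n as [|n IH].
  - simpl; lra.
  - change (a * a ^ S n < b * b ^ S n).
    assert (0 <= a ^ S n) by (apply pow_le; lra).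
    nra.
Qed.

Lemma pow_lt_m (a b : R) (n : nat) : (0 < n)%nat -> 0 <= a < b -> a ^ n < b ^ n.
Proof. intros Hn H. destruct n; [lia|]. now apply powS_lt. Qed.

Lemma pow_le_inv (a b : R) (n : nat) : (0 < n)%nat -> 0 <= a -> 0 <= b -> a ^ n <= b ^ n -> a <= b.
Proof.
  intros Hn Ha Hb H. destruct (Rle_lt_dec a b) as [|Hlt]; auto.
  assert (b ^ n < a ^ n) by (apply pow_lt_m; auto). lra.
Qed.

Lemma pow_eq0 (a : R) (n : nat) : a ^ n = 0 -> a = 0.
Proof. intros H. destruct (Req_dec a 0); auto. exfalso; now apply (pow_nonzero a n). Qed.

Lemma pnorm_spec (n : nat) (p : R * R) : (0 < n)%nat ->
  0 <= pnorm n p /\ pnorm n p ^ n = Rabs (fst p) ^ n + Rabs (snd p) ^ n.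
Proof.
  intros Hn. unfold pnorm.
  destruct (Req_EM_T _ _) as [E|E].
  - rewrite E, pow_i; auto. lra.
  - assert (Hs : 0 < Rabs (fst p) ^ n + Rabs (snd p) ^ n).
    { assert (0 <= Rabs (fst p) ^ n) by (apply pow_le, Rabs_pos).
      assert (0 <= Rabs (snd p) ^ n) by (apply pow_le, Rabs_pos). lra. }
    split.
    + unfold Rpower. left; apply exp_pos.
    + rewrite <- Rpower_pow by (unfold Rpower; apply exp_pos).
      rewrite Rpower_mult. rewrite Rinv_l. apply Rpower_1; auto.
      apply not_0_INR; lia.
Qed.

Lemma pnorm_char (n : nat) (p : R * R) (r : R) : (0 < n)%nat -> 0 <= r ->
  r ^ n = Rabs (fst p) ^ n + Rabs (snd p) ^ n -> pnorm n p = r.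
Proof.
  intros Hn Hr H. destruct (pnorm_spec n p Hn) as [H1 H2].
  apply Rle_antisym; apply (pow_le_inv _ _ n); auto; lra.
Qed.

Lemma pnorm_le (n : nat) (p : R * R) (r : R) : (0 < n)%nat -> 0 <= r ->
  Rabs (fst p) ^ n + Rabs (snd p) ^ n <= r ^ n -> pnorm n p <= r.
Proof.
  intros Hn Hr H. destruct (pnorm_spec n p Hn) as [H1 H2].
  apply (pow_le_inv _ _ n); auto; lra.
Qed.

Lemma pnorm_ge (n : nat) (p : R * R) (r : R) : (0 < n)%nat -> 0 <= r ->
  r ^ n <= Rabs (fst p) ^ n + Rabs (snd p) ^ n -> r <= pnorm n p.
Proof.
  intros Hn Hr H. destruct (pnorm_spec n p Hn) as [H1 H2].
  apply (pow_le_inv _ _ n); auto; lra.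
Qed.

Lemma pow_mono_prod (a b : R) (n : nat) : 0 <= a -> 0 <= b -> 0 <= (a - b) * (a ^ n - b ^ n).
Proof.
  intros Ha Hb. destruct (Rle_lt_dec a b).
  - assert (a ^ n <= b ^ n) by (apply pow_incr; lra). nra.
  - assert (b ^ n <= a ^ n) by (apply pow_incr; lra). nra.
Qed.

Lemma conv_pow (a b l : R) (n : nat) : 0 <= a -> 0 <= b -> 0 <= l <= 1 ->
  (l * a + (1 - l) * b) ^ n <= l * a ^ n + (1 - l) * b ^ n.
Proof.
  intros Ha Hb Hl. induction n as [|n IH].
  - simpl. lra.
  - change ((l * a + (1 - l) * b) * (l * a + (1 - l) * b) ^ n <=
            l * (a * a ^ n) + (1 - l) * (b * b ^ n)).
    assert (Hc : 0 <= l * a + (1 - l) * b) by nra.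
    assert (H1 : (l * a + (1 - l) * b) * (l * a + (1 - l) * b) ^ n <=
                 (l * a + (1 - l) * b) * (l * a ^ n + (1 - l) * b ^ n))
      by (apply Rmult_le_compat_l; auto).
    assert (H2 := pow_mono_prod a b n Ha Hb).
    assert (H3 : 0 <= l * (1 - l)) by nra.
    assert (E : l * (a * a ^ n) + (1 - l) * (b * b ^ n) -
       (l * a + (1 - l) * b) * (l * a ^ n + (1 - l) * b ^ n) =
       (l * (1 - l)) * ((a - b) * (a ^ n - b ^ n))) by ring.
    assert (0 <= (l * (1 - l)) * ((a - b) * (a ^ n - b ^ n))) by (apply Rmult_le_pos; auto).
    lra.
Qed.
Lemma div_pow (x y : R) (n : nat) : y <> 0 -> (x / y) ^ n = x ^ n / y ^ n.
Proof. intros. unfold Rdiv. now rewrite Rpow_mult_distr, pow_inv. Qed.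

Lemma mink_nn (a1 a2 b1 b2 A B : R) (n : nat) : (0 < n)%nat ->
  0 <= a1 -> 0 <= a2 -> 0 <= b1 -> 0 <= b2 -> 0 <= A -> 0 <= B ->
  a1 ^ n + a2 ^ n = A ^ n -> b1 ^ n + b2 ^ n = B ^ n ->
  (a1 + b1) ^ n + (a2 + b2) ^ n <= (A + B) ^ n.
Proof.
  intros Hn H1 H2 H3 H4 HA HB EA EB.
  assert (P1 : 0 <= a1 ^ n) by (apply pow_le; lra).
  assert (P2 : 0 <= a2 ^ n) by (apply pow_le; lra).
  assert (P3 : 0 <= b1 ^ n) by (apply pow_le; lra).
  assert (P4 : 0 <= b2 ^ n) by (apply pow_le; lra).
  destruct (Req_dec A 0) as [A0|A0].
  { rewrite A0, pow_i in EA by auto.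
    assert (a1 = 0) by (apply (pow_eq0 _ n); lra).
    assert (a2 = 0) by (apply (pow_eq0 _ n); lra). subst.
    rewrite !Rplus_0_l. lra. }
  destruct (Req_dec B 0) as [B0|B0].
  { rewrite B0, pow_i in EB by auto.
    assert (b1 = 0) by (apply (pow_eq0 _ n); lra).
    assert (b2 = 0) by (apply (pow_eq0 _ n); lra). subst.
    rewrite !Rplus_0_r. lra. }
  assert (HA' : 0 < A) by lra. assert (HB' : 0 < B) by lra.
  set (l := A / (A + B)).
  assert (Hl : 0 <= l <= 1).
  { unfold l; split. apply Rdiv_le_0_compat; lra.
    apply Rmult_le_reg_r with (A + B); [lra|]. unfold Rdiv. rewrite Rmult_assoc, Rinv_l by lra. lra. }
  assert (C1 := conv_pow (a1 / A) (b1 / B) l n ltac:(apply Rdiv_le_0_compat; lra) ltac:(apply Rdiv_le_0_compat; lra) Hl).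
  assert (C2 := conv_pow (a2 / A) (b2 / B) l n ltac:(apply Rdiv_le_0_compat; lra) ltac:(apply Rdiv_le_0_compat; lra) Hl).
  assert (E1 : l * (a1 / A) + (1 - l) * (b1 / B) = (a1 + b1) / (A + B)) by (unfold l; field; lra).
  assert (E2 : l * (a2 / A) + (1 - l) * (b2 / B) = (a2 + b2) / (A + B)) by (unfold l; field; lra).
  rewrite E1 in C1. rewrite E2 in C2.
  rewrite !div_pow in C1, C2 by lra.
  assert (HP : 0 < (A + B) ^ n) by (apply pow_lt; lra).
  assert (HAn : 0 < A ^ n) by (apply pow_lt; lra).
  assert (HBn : 0 < B ^ n) by (apply pow_lt; lra).
  assert (S : (a1 + b1) ^ n / (A + B) ^ n + (a2 + b2) ^ n / (A + B) ^ n <= 1).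
  { assert (E3 : l * (a1 ^ n / A ^ n) + (1 - l) * (b1 ^ n / B ^ n) +
                 (l * (a2 ^ n / A ^ n) + (1 - l) * (b2 ^ n / B ^ n)) =
                 l * ((a1 ^ n + a2 ^ n) / A ^ n) + (1 - l) * ((b1 ^ n + b2 ^ n) / B ^ n))
      by (field; lra).
    rewrite EA, EB in E3. unfold Rdiv at 5 6 in E3. rewrite !Rinv_r in E3 by lra. lra. }
  assert (E4 : (a1 + b1) ^ n / (A + B) ^ n + (a2 + b2) ^ n / (A + B) ^ n =
      ((a1 + b1) ^ n + (a2 + b2) ^ n) / (A + B) ^ n) by (field; lra).
  rewrite E4 in S.
  apply Rmult_le_compat_r with (r := (A + B) ^ n) in S; [|lra].
  unfold Rdiv in S. rewrite Rmult_assoc, Rinv_l in S by lra. lra.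
Qed.

Lemma pnorm_tri (n : nat) (p q : R * R) : (0 < n)%nat ->
  pnorm n (fst p - fst q, snd p - snd q) <= pnorm n p + pnorm n q.
Proof.
  intros Hn. destruct (pnorm_spec n p Hn) as [Hp Ep]. destruct (pnorm_spec n q Hn) as [Hq Eq].
  apply pnorm_le; auto. lra. simpl.
  assert (T1 : Rabs (fst p - fst q) <= Rabs (fst p) + Rabs (fst q)).
  { unfold Rminus. rewrite <- (Rabs_Ropp (fst q)). apply Rabs_triang. }
  assert (T2 : Rabs (snd p - snd q) <= Rabs (snd p) + Rabs (snd q)).
  { unfold Rminus. rewrite <- (Rabs_Ropp (snd q)). apply Rabs_triang. }
  assert (U1 : Rabs (fst p - fst q) ^ n <= (Rabs (fst p) + Rabs (fst q)) ^ n) by (apply pow_incr; split; auto; apply Rabs_pos).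
  assert (U2 : Rabs (snd p - snd q) ^ n <= (Rabs (snd p) + Rabs (snd q)) ^ n) by (apply pow_incr; split; auto; apply Rabs_pos).
  assert (M := mink_nn (Rabs (fst p)) (Rabs (snd p)) (Rabs (fst q)) (Rabs (snd q)) (pnorm n p) (pnorm n q) n Hn
     (Rabs_pos _) (Rabs_pos _) (Rabs_pos _) (Rabs_pos _) Hp Hq (eq_sym Ep) (eq_sym Eq)).
  lra.
Qed.
Lemma sqterm_nn (u : Xseq) k : 0 <= sqterm u k.
Proof. unfold sqterm. apply pow2_ge_0. Qed.

Lemma Series_nn (a : nat -> R) : (forall k, 0 <= a k) -> ex_series a -> 0 <= Series a.
Proof.
  intros H Ha.
  assert (E : Series (fun k => 0 * a k) = 0) by (rewrite Series_scal_l; ring).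
  rewrite <- E. apply Series_le; auto. intros k; rewrite Rmult_0_l; split; [lra| auto].
Qed.

Lemma sq_bound (al be de : R) : 0 <= al -> 0 <= de -> 0 <= be -> be <= al + de ->
  be ^ 2 <= 2 * al ^ 2 + 2 * de ^ 2.
Proof. intros. assert (0 <= (al - de)^2) by apply pow2_ge_0. assert (be^2 <= (al+de)^2) by (apply pow_incr; lra). nra. Qed.

Lemma ex_series_comb (a b : nat -> R) : ex_series a -> ex_series b ->
  ex_series (fun k => 2 * a k + 2 * b k).
Proof.
  intros [la Ha] [lb Hb]. exists (2 * la + 2 * lb).
  apply (is_series_plus (fun k => 2 * a k) (fun k => 2 * b k)).
  - apply (is_series_scal_l 2 a la Ha).
  - apply (is_series_scal_l 2 b lb Hb).
Qed.

Lemma lower_bound (a b : Xseq) : BX a -> Bout b -> 1 <= normX (subX a b).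
Proof.
  intros [Ia Na] [Ib Nb].
  set (d := subX a b).
  assert (Pd : forall k, sqterm d k <= 2 * sqterm a k + 2 * sqterm b k).
  { intros k. unfold sqterm, d, subX.
    assert (H := pnorm_tri (k + 2) (a k) (b k) ltac:(lia)).
    apply sq_bound; auto; apply pnorm_spec; lia. }
  assert (Pb : forall k, sqterm b k <= 2 * sqterm a k + 2 * sqterm d k).
  { intros k. unfold sqterm.
    assert (H := pnorm_tri (k + 2) (a k) (d k) ltac:(lia)).
    assert (Eb : (fst (a k) - fst (d k), snd (a k) - snd (d k)) = b k).
    { unfold d, subX; simpl. destruct (b k); simpl. f_equal; ring. }
    rewrite Eb in H.
    apply sq_bound; auto; apply pnorm_spec; lia. }
  assert (Id : ex_series (sqterm d)).
  { apply (@ex_series_le R_AbsRing R_CompleteNormedModule _ (fun k => 2 * sqterm a k + 2 * sqterm b k)).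
    - intros k. change (norm (sqterm d k)) with (Rabs (sqterm d k)).
      rewrite Rabs_pos_eq by apply sqterm_nn. auto.
    - apply ex_series_comb; auto. }
  assert (Sb : Series (sqterm b) <= 2 * Series (sqterm a) + 2 * Series (sqterm d)).
  { rewrite <- !Series_scal_l, <- Series_plus.
    - apply Series_le. intros k; split; [apply sqterm_nn| auto].
      apply ex_series_comb; auto.
    - destruct Ia as [la Ha]. exists (2 * la). apply (is_series_scal_l 2 _ la Ha).
    - destruct Id as [la Ha]. exists (2 * la). apply (is_series_scal_l 2 _ la Ha). }
  unfold normX in *.
  assert (Ha0 := Series_nn _ (sqterm_nn a) Ia).
  assert (Hb0 := Series_nn _ (sqterm_nn b) Ib).
  assert (Hd0 := Series_nn _ (sqterm_nn d) Id).
  assert (Ea := sqrt_sqrt _ Ha0). assert (Eb := sqrt_sqrt _ Hb0). assert (Ed := sqrt_sqrt _ Hd0).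
  assert (0 <= sqrt (Series (sqterm a))) by apply sqrt_pos.
  assert (0 <= sqrt (Series (sqterm d))) by apply sqrt_pos.
  fold d in Ed |- *.
  assert (Series (sqterm a) <= 1) by nra.
  assert (4 <= Series (sqterm b)) by nra.
  assert (1 <= Series (sqterm d)) by lra.
  nra.
Qed.
From Stdlib Require Import FunctionalExtensionality.

Definition ek (k : nat) (v : R * R) : Xseq :=
  fun j => if Nat.eqb j k then v else (0, 0).

Lemma pnorm00 n : (0 < n)%nat -> pnorm n (0, 0) = 0.
Proof. intros Hn. apply pnorm_char; auto; try lra. simpl. rewrite Rabs_R0, !pow_i; auto; ring. Qed.

Lemma sum_single (a : nat -> R) k : (forall j, j <> k -> a j = 0) ->
  forall N, sum_n a N = if Nat.leb k N then a k else 0.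
Proof.
  intros H N. induction N as [|N IH].
  - rewrite sum_O. destruct k; simpl; auto.
  - rewrite sum_Sn, IH. change (plus ?x ?y) with (x + y).
    destruct (Nat.eqb_spec k (S N)) as [E|E].
    + subst. replace (Nat.leb (S N) N) with false by (symmetry; apply Nat.leb_gt; lia).
      rewrite Nat.leb_refl. apply Rplus_0_l.
    + rewrite (H (S N)) by auto.
      destruct (Nat.leb_spec k N); destruct (Nat.leb_spec k (S N)); try lia; [apply Rplus_0_r|apply Rplus_0_l].
Qed.

Lemma is_series_single (a : nat -> R) k : (forall j, j <> k -> a j = 0) -> is_series a (a k).
Proof.
  intros H. unfold is_series.
  change (is_lim_seq (sum_n a) (a k)).
  apply (is_lim_seq_ext_loc (fun _ => a k)).
  - exists k. intros N HN. rewrite (sum_single a k H). 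
    replace (Nat.leb k N) with true by (symmetry; apply Nat.leb_le; lia). auto.
  - apply is_lim_seq_const.
Qed.

Lemma ek_norm k v : inX (ek k v) /\ normX (ek k v) = pnorm (k + 2) v.
Proof.
  assert (H : is_series (sqterm (ek k v)) (sqterm (ek k v) k)).
  { apply is_series_single. intros j Hj. unfold sqterm, ek.
    destruct (Nat.eqb_spec j k); [lia|]. rewrite pnorm00 by lia. ring. }
  split. exists (sqterm (ek k v) k). auto.
  unfold normX. rewrite (is_series_unique _ _ H). unfold sqterm, ek.
  rewrite Nat.eqb_refl. apply sqrt_pow2. apply pnorm_spec. lia.
Qed.

Lemma ek_sub k v w : subX (ek k v) (ek k w) = ek k (fst v - fst w, snd v - snd w).
Proof.
  apply functional_extensionality. intros j. unfold subX, ek.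
  destruct (Nat.eqb j k); simpl; auto. f_equal; ring.
Qed.

Lemma distX_1 : distX BX Bout = Finite 1.
Proof.
  unfold distX. apply is_glb_Rbar_unique. split.
  - intros r [a [b [Ha [Hb E]]]]. subst. simpl. apply lower_bound; auto.
  - intros l Hl. apply Hl. exists (ek 0 (1, 0)), (ek 0 (2, 0)).
    destruct (ek_norm 0 (1, 0)) as [I1 N1]. destruct (ek_norm 0 (2, 0)) as [I2 N2].
    assert (P1 : pnorm 2 (1, 0) = 1) by (apply pnorm_char; [lia|lra|]; simpl; rewrite Rabs_R1, Rabs_R0; ring).
    assert (P2 : pnorm 2 (2, 0) = 2) by (apply pnorm_char; [lia|lra|]; simpl; rewrite Rabs_R0, Rabs_pos_eq by lra; ring).
    split; [split; auto; rewrite N1; simpl; lra|].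
    split; [split; auto; rewrite N2; simpl; lra|].
    rewrite ek_sub. rewrite (proj2 (ek_norm _ _)). symmetry. apply pnorm_char; [lia|lra|].
    simpl. replace (0 - 0) with 0 by ring. rewrite Rabs_R0. replace (1 - 2) with (- (1)) by ring. rewrite Rabs_Ropp, Rabs_R1. ring.
Qed.
Lemma bernoulli (t : R) (n : nat) : 0 <= t -> 1 + INR n * t <= (1 + t) ^ n.
Proof.
  intros Ht. induction n as [|n IH].
  - simpl. lra.
  - rewrite S_INR. simpl.
    assert (0 <= INR n) by apply pos_INR. nra.
Qed.

Definition cc (m : nat) : R := Rpower (/ 2) (/ INR (m + 2)).

Lemma cc_props m : 0 < cc m /\ cc m ^ (m + 2) = / 2 /\ cc m <= 1 /\ 1 - / INR (m + 2) <= cc m.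
Proof.
  set (n := (m + 2)%nat). set (c := cc m).
  assert (Hn : 0 < INR n) by (apply lt_0_INR; unfold n; lia).
  assert (Hc : 0 < c) by (unfold c, cc, Rpower; apply exp_pos).
  assert (Ec : c ^ n = / 2).
  { rewrite <- Rpower_pow by auto. unfold c, cc. fold n. rewrite Rpower_mult, Rinv_l by lra.
    apply Rpower_1; lra. }
  assert (Hc1 : c <= 1).
  { destruct (Rle_lt_dec c 1); auto.
    assert (1 ^ n < c ^ n) by (apply pow_lt_m; [unfold n; lia| lra]). rewrite pow1 in H. lra. }
  repeat split; auto.
  set (d := / c - 1).
  assert (Hic : 1 <= / c).
  { apply Rmult_le_reg_r with c; auto. rewrite Rinv_l by lra. lra. }
  assert (Hd : 0 <= d) by (unfold d; lra).
  assert (B := bernoulli d n Hd).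
  replace (1 + d) with (/ c) in B by (unfold d; ring).
  rewrite pow_inv, Ec, Rinv_inv in B.
  assert (Hdn : d <= / INR n).
  { apply Rmult_le_reg_l with (INR n); auto. rewrite Rinv_r by lra. lra. }
  assert (E1 : c * (1 + d) = 1) by (unfold d; field; lra).
  assert (0 <= d * d) by nra.
  nra.
Qed.

Lemma lim_inv_n2 : is_lim_seq (fun m => / INR (m + 2)) 0.
Proof.
  assert (H : is_lim_seq (fun n => / INR n) 0).
  { replace (Finite 0) with (Rbar_inv p_infty) by reflexivity.
    apply is_lim_seq_inv. apply is_lim_seq_INR. discriminate. }
  apply (is_lim_seq_incr_n (fun n => / INR n) 2 0) in H. exact H.
Qed.

Lemma cc_lim : is_lim_seq cc 1.
Proof.
  apply is_lim_seq_le_le with (u := fun m => 1 - / INR (m + 2)) (w := fun _ => 1).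
  - intros m. destruct (cc_props m) as (_ & _ & H1 & H2). lra.
  - replace (Finite 1) with (Finite (1 - 0)) by (f_equal; ring).
    apply is_lim_seq_minus'. apply is_lim_seq_const. apply lim_inv_n2.
  - apply is_lim_seq_const.
Qed.

Lemma pnorm_mix m (p : R * R) : Rabs (fst p) = 2 - cc m -> Rabs (snd p) = cc m ->
  1 <= pnorm (m + 2) p <= 1 + (3 / 2) * / INR (m + 2).
Proof.
  intros E1 E2. destruct (cc_props m) as (Hc & Ec & Hc1 & _).
  set (n := (m + 2)%nat) in *. set (c := cc m) in *.
  assert (Hn : 0 < INR n) by (apply lt_0_INR; unfold n; lia).
  assert (Hge : 1 <= (2 - c) ^ n) by (rewrite <- (pow1 n); apply pow_incr; lra).
  split.
  - apply pnorm_ge; [unfold n; lia| lra|]. rewrite E1, E2, Ec, pow1. lra.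
  - apply pnorm_le; [unfold n; lia| |].
    + assert (0 <= / INR n) by (left; apply Rinv_0_lt_compat; auto). lra.
    + rewrite E1, E2, Ec.
      assert (P : ((2 - c) * c) ^ n <= 1 ^ n) by (apply pow_incr; split; nra).
      rewrite Rpow_mult_distr, Ec, pow1 in P.
      assert (B := bernoulli ((3 / 2) * / INR n) n ltac:(left; apply Rmult_lt_0_compat; [lra| apply Rinv_0_lt_compat; auto])).
      replace (INR n * (3 / 2 * / INR n)) with (3 / 2) in B by (field; lra).
      lra.
Qed.
Definition xs (m : nat) : Xseq := ek m (cc m, cc m).
Definition zs (m : nat) : Xseq := ek m (cc m, - cc m).
Definition ys (m : nat) : Xseq := ek m (2, 0).

Lemma abs_c m : Rabs (cc m) = cc m.
Proof. apply Rabs_pos_eq. left; apply cc_props. Qed.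

Lemma nx m : normX (xs m) = 1.
Proof.
  unfold xs. rewrite (proj2 (ek_norm _ _)). destruct (cc_props m) as (_ & Ec & _).
  apply pnorm_char; [lia|lra|]. simpl fst; simpl snd. rewrite abs_c, Ec, pow1. field.
Qed.

Lemma nz m : normX (zs m) = 1.
Proof.
  unfold zs. rewrite (proj2 (ek_norm _ _)). destruct (cc_props m) as (_ & Ec & _).
  apply pnorm_char; [lia|lra|]. simpl fst; simpl snd. rewrite Rabs_Ropp, abs_c, Ec, pow1. field.
Qed.

Lemma ny m : normX (ys m) = 2.
Proof.
  unfold ys. rewrite (proj2 (ek_norm _ _)).
  apply pnorm_char; [lia|lra|]. simpl fst; simpl snd. rewrite Rabs_R0, pow_i by lia.
  rewrite Rabs_pos_eq by lra. ring.
Qed.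

Lemma lim_mix (f : nat -> R) : (forall m, 1 <= f m <= 1 + (3 / 2) * / INR (m + 2)) ->
  is_lim_seq f 1.
Proof.
  intros H. apply is_lim_seq_le_le with (u := fun _ => 1) (w := fun m => 1 + (3 / 2) * / INR (m + 2)); auto.
  - apply is_lim_seq_const.
  - replace (Finite 1) with (Finite (1 + 3 / 2 * 0)) by (f_equal; ring).
    apply is_lim_seq_plus'. apply is_lim_seq_const.
    apply (is_lim_seq_scal_l _ (3/2) 0). apply lim_inv_n2.
Qed.

Lemma dxy m : 1 <= normX (subX (xs m) (ys m)) <= 1 + (3 / 2) * / INR (m + 2).
Proof.
  unfold xs, ys. rewrite ek_sub, (proj2 (ek_norm _ _)). destruct (cc_props m) as (Hc & _ & Hc1 & _).
  apply pnorm_mix; simpl.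
  - rewrite Rabs_left1 by lra. ring.
  - rewrite Rminus_0_r. apply abs_c.
Qed.

Lemma dzy m : 1 <= normX (subX (zs m) (ys m)) <= 1 + (3 / 2) * / INR (m + 2).
Proof.
  unfold zs, ys. rewrite ek_sub, (proj2 (ek_norm _ _)). destruct (cc_props m) as (Hc & _ & Hc1 & _).
  apply pnorm_mix; simpl.
  - rewrite Rabs_left1 by lra. ring.
  - rewrite Rminus_0_r, Rabs_Ropp. apply abs_c.
Qed.

Lemma dxz m : normX (subX (xs m) (zs m)) = 2 * cc m.
Proof.
  unfold xs, zs. rewrite ek_sub, (proj2 (ek_norm _ _)). destruct (cc_props m) as (Hc & _ & Hc1 & _).
  apply pnorm_char; [lia|lra|]. simpl fst; simpl snd.
  replace (cc m - cc m) with 0 by ring. replace (cc m - - cc m) with (2 * cc m) by ring.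
  rewrite Rabs_R0, pow_i by lia. rewrite Rabs_pos_eq by lra. ring.
Qed.

Lemma lim_xz : is_lim_seq (fun m => normX (subX (xs m) (zs m))) 2.
Proof.
  apply is_lim_seq_ext with (fun m => 2 * cc m). intros; rewrite dxz; auto.
  replace (Finite 2) with (Rbar_mult 2 1) by (simpl; f_equal; ring).
  apply is_lim_seq_scal_l. apply cc_lim.
Qed.

Theorem mainTheorem18 :
  (exists x z y : nat -> Xseq,
      (forall m, BX (x m)) /\ (forall m, BX (z m)) /\ (forall m, Bout (y m)) /\
      boundedX x /\ boundedX z /\
      distX BX Bout = Finite 1 /\
      is_lim_seq (fun m => normX (subX (x m) (y m))) 1 /\
      is_lim_seq (fun m => normX (subX (z m) (y m))) 1 /\
      is_lim_seq (fun m => normX (subX (x m) (z m))) 2)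
  /\ ~ UC BX Bout /\ ~ BUC BX Bout.
Proof.
  assert (HX : forall m, BX (xs m)) by (intros m; split; [apply ek_norm| rewrite nx; lra]).
  assert (HZ : forall m, BX (zs m)) by (intros m; split; [apply ek_norm| rewrite nz; lra]).
  assert (HY : forall m, Bout (ys m)) by (intros m; split; [apply ek_norm| rewrite ny; lra]).
  assert (BXb : boundedX xs) by (exists 1; intros m; rewrite nx; lra).
  assert (BZb : boundedX zs) by (exists 1; intros m; rewrite nz; lra).
  assert (L1 : is_lim_seq (fun m => normX (subX (xs m) (ys m))) 1) by (apply lim_mix, dxy).
  assert (L2 : is_lim_seq (fun m => normX (subX (zs m) (ys m))) 1) by (apply lim_mix, dzy).
  assert (L3 := lim_xz).
  split; [|split].
  - exists xs, zs, ys. exact (conj HX (conj HZ (conj HY (conj BXb (conj BZb (conj distX_1 (conj L1 (conj L2 L3)))))))).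
  - intros H. red in H. rewrite distX_1 in H.
    assert (L0 := H xs zs ys HX HZ HY L1 L2).
    apply is_lim_seq_unique in L0. apply is_lim_seq_unique in L3.
    rewrite L0 in L3. injection L3. lra.
  - intros H. red in H. rewrite distX_1 in H.
    assert (L0 := H xs zs ys HX HZ HY BXb BZb L1 L2).
    apply is_lim_seq_unique in L0. apply is_lim_seq_unique in L3.
    rewrite L0 in L3. injection L3. lra.
Qed.
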